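(* Let $n\ge 3$ and $m\ge 2$ be integers, and let $F$, $R$ be as in the context. In the group $F/[R,F]$ the following hold: (1) for $1\le i<j-1\le n-2$, the order of $[s_i,s_j]$ divides $m$; (2) for $1\le i\le n-2$, the order of $[s_i,s_{i+1},s_i]$ divides $m$, and the order of $[s_i,s_{i+1},s_is_{i+1}^{-1}]$ divides $\gcd\!\big(m,\binom{m}{2}\big)$; (3) for $1\le i\le n-3$, the order of $[[s_i,s_{i+1}],[s_{i+1},s_{i+2}]]$ divides $\gcd(2,m)$.
   Context: Commutator conventions: $[a,b]=a^{-1}b^{-1}ab$, $a^b=b^{-1}ab$, and commutators are left-normed: $[a_1,\dots,a_k]=[[a_1,\dots,a_{k-1}],a_k]$. Let $F$ be the free group on $s_1,\dots,s_{n-1}$ and let $R$ be the normal closure in $F$ of the following relators: $s_i^m$ ($1\le i\le n-1$); $[s_i,s_j]$ ($1\le i<j-1\le n-2$); $[s_i,s_{i+1},s_i]$ and $[s_i,s_{i+1},s_{i+1}]$ ($1\le i\le n-2$); $[[s_i,s_{i+1}],[s_{i+1},s_{i+2}]]$ ($1\le i\le n-3$). It is known that $F/R\cong \mathrm{UT}_n(\mathbb Z/m\mathbb Z)$ (the group of upper unitriangular $n\times n$ matrices over $\mathbb Z/m\mathbb Z$) via $s_i\mapsto I+E_{i,i+1}$. *)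

(* Defs.v *)
From mathcomp Require Import all_boot.
Set Implicit Arguments. Unset Strict Implicit. Unset Printing Implicit Defensive.

(* A letter (i, false) stands for s_i, (i, true) for s_i^{-1}. *)
Definition letter := (nat * bool)%type.
Definition word := seq letter.

Definition linv (a : letter) : letter := (a.1, ~~ a.2).
Definition winv (w : word) : word := rev (map linv w).
Definition gen (i : nat) : word := [:: (i, false)].
Fixpoint wpow (w : word) (k : nat) : word :=
  if k is k'.+1 then w ++ wpow w k' else [::].
Definition wcomm (a b : word) : word := winv a ++ winv b ++ a ++ b.
Definition wconj (a b : word) : word := winv b ++ a ++ b.

(* Free equivalence of words: the equivalence relation generated by
   deleting a cancelling pair x x^-1. Words modulo freeq = free group. *)
Inductive freeq : word -> word -> Prop :=
| freeq_red (u v : word) (a : letter) : freeq (u ++ a :: linv a :: v) (u ++ v)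
| freeq_refl (u : word) : freeq u u
| freeq_sym (u v : word) : freeq u v -> freeq v u
| freeq_trans (u v w : word) : freeq u v -> freeq v w -> freeq u w.

(* Words in the generators s_1, ..., s_{n-1}, i.e. words representing
   elements of F. *)
Definition wordin (n : nat) (w : word) : bool :=
  all (fun a : letter => (1 <= a.1 <= n - 1)) w.

(* ncl n S w : (the class of) w lies in the normal closure in F of the
   set S (more precisely of the elements represented by words in S). *)
Inductive ncl (n : nat) (S : word -> Prop) : word -> Prop :=
| ncl_gen (w : word) : S w -> ncl n S w
| ncl_one : ncl n S [::]
| ncl_mul (u v : word) : ncl n S u -> ncl n S v -> ncl n S (u ++ v)
| ncl_inv (u : word) : ncl n S u -> ncl n S (winv u)
| ncl_conj (u g : word) : wordin n g -> ncl n S u -> ncl n S (wconj u g)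
| ncl_eq (u v : word) : freeq u v -> ncl n S u -> ncl n S v.

(* The defining relators of UT_n(Z/mZ). *)
Definition relator (n m : nat) (r : word) : Prop :=
  (exists i, [/\ 1 <= i, i <= n - 1 & r = wpow (gen i) m])
  \/ (exists i j, [/\ 1 <= i, i < j.-1, j.-1 <= n - 2
                    & r = wcomm (gen i) (gen j)])
  \/ (exists i, [/\ 1 <= i, i <= n - 2 &
        (r = wcomm (wcomm (gen i) (gen i.+1)) (gen i)
         \/ r = wcomm (wcomm (gen i) (gen i.+1)) (gen i.+1))])
  \/ (exists i, [/\ 1 <= i, i <= n - 3 &
        r = wcomm (wcomm (gen i) (gen i.+1)) (wcomm (gen i.+1) (gen i.+2))]).

Definition inR (n m : nat) (w : word) : Prop := ncl n (relator n m) w.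

Definition RFgen (n m : nat) (w : word) : Prop :=
  exists r f, [/\ wordin n r, wordin n f, inR n m r & w = wcomm r f].

Definition inRF (n m : nat) (w : word) : Prop := ncl n (RFgen n m) w.

Definition order_dvd_FRF (n m : nat) (g : word) (k : nat) : Prop :=
  inRF n m (wpow g k).

(* Main.v *)
From HB Require Import structures.
Require Import Defs.
From mathcomp Require Import all_boot.
Set Implicit Arguments. Unset Strict Implicit. Unset Printing Implicit Defensive.

Lemma linvK : involutive linv. Proof. by case=> i b; rewrite /linv /= negbK. Qed.
Lemma winv_cat u v : winv (u ++ v) = winv v ++ winv u.
Proof. by rewrite /winv map_cat rev_cat. Qed.
Lemma winvK : involutive winv.
Proof. by move=> u; rewrite /winv map_rev revK -map_comp map_id_in // => a _; apply: linvK. Qed.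
Lemma wordin_cat n u v : wordin n (u ++ v) = wordin n u && wordin n v.
Proof. exact: all_cat. Qed.
Lemma wordin_winv n u : wordin n (winv u) = wordin n u.
Proof. by rewrite /wordin /winv all_rev all_map. Qed.

Lemma freeq_ctx u v p s : freeq u v -> freeq (p ++ u ++ s) (p ++ v ++ s).
Proof.
elim=> {u v} [u v a| u | u v _ IH | u v w _ IH1 _ IH2].
- by have := freeq_red (p ++ u) (v ++ s) a; rewrite -!catA.
- exact: freeq_refl.
- exact: freeq_sym.
- exact: freeq_trans IH2.
Qed.
Lemma freeq_cancel u : freeq (u ++ winv u) [::].
Proof.
elim: u => [|a u IH] /=; first exact: freeq_refl.
rewrite /winv /= rev_cons -cats1 -/(winv u).
apply: (@freeq_trans _ ([:: a] ++ [::] ++ [:: linv a])).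
  by rewrite catA; apply: (freeq_ctx [:: a] [:: linv a] IH).
by have := freeq_red [::] [::] a.
Qed.
Lemma freeq_cancelV u : freeq (winv u ++ u) [::].
Proof. by have := freeq_cancel (winv u); rewrite winvK. Qed.

Lemma freeq_ins p s x : freeq (p ++ x ++ winv x ++ s) (p ++ s).
Proof. by have := freeq_ctx p s (freeq_cancel x); rewrite -catA. Qed.
Lemma freeq_insV p s x : freeq (p ++ winv x ++ x ++ s) (p ++ s).
Proof. by have := freeq_ctx p s (freeq_cancelV x); rewrite -catA. Qed.

From mathcomp Require Import boolp.
Local Open Scope group_scope.


Ltac gsimp := rewrite /commg /conjg ?invgM ?invgK -?mulgA;
  rewrite ?(mulKg, mulVKg, mulgV, mulVg, mulg1, mul1g).

Section GT.
Variable G : groupType.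
Implicit Types x y z u v a b g h q : G.

Definition central g := forall h, g * h = h * g.

Lemma central_conj g h : central g -> g ^ h = g.
Proof. by move=> cg; rewrite /conjg cg mulKg. Qed.
Lemma central_commr g h : central g -> [~ h, g] = 1.
Proof. by move=> cg; rewrite /commg /conjg -cg mulKg mulVg. Qed.
Lemma central_comml g h : central g -> [~ g, h] = 1.
Proof. by move=> cg; rewrite /commg /conjg cg mulKg mulVg. Qed.
Lemma centralV g : central g -> central g^-1.
Proof.
move=> cg h; apply: (@mulgI _ g).
by rewrite mulVKg mulgA cg mulgK.
Qed.
Lemma centralM g h : central g -> central h -> central (g * h).
Proof. by move=> cg ch k; rewrite -mulgA ch mulgA [g * k]cg -mulgA. Qed.
Lemma centralX g k : central g -> central (g ^+ k).
Proof.
move=> cg; elim: k => [|k IH]; first by move=> h; rewrite expg0 mulg1 mul1g.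
by rewrite expgS; apply: centralM.
Qed.
Lemma central1 : central 1.
Proof. by move=> h; rewrite mulg1 mul1g. Qed.

Lemma commMl x u y : [~ x * u, y] = [~ x, y] ^ u * [~ u, y].
Proof. by gsimp. Qed.
Lemma commMr a g u : [~ a, g * u] = [~ a, u] * [~ a, g] ^ u.
Proof. by gsimp. Qed.
Lemma conjC x y : x ^ y = x * [~ x, y].
Proof. by gsimp. Qed.
Lemma commVr a y : [~ a, y^-1] = ([~ a, y]^-1) ^ y^-1.
Proof. by gsimp. Qed.
Lemma commVl u v : [~ u^-1, v] = ([~ u, v]^-1) ^ u^-1.
Proof. by gsimp. Qed.

Lemma commXl x y k : central [~ x, y] -> [~ x ^+ k, y] = [~ x, y] ^+ k.
Proof.
move=> c; elim: k => [|k IH]; first by rewrite !expg0 comm1g.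
by rewrite !expgS commMl IH central_conj.
Qed.
Lemma commXr a g k : central [~ a, g] -> [~ a, g ^+ k] = [~ a, g] ^+ k.
Proof.
move=> c; elim: k => [|k IH]; first by rewrite !expg0 commg1.
by rewrite !expgS commMr IH central_conj.
Qed.

Lemma conj_central x q : central q -> x ^ q = x.
Proof. by move=> cq; rewrite /conjg -cq mulKg. Qed.
Lemma commcl_r q x y : central q -> [~ x * q, y] = [~ x, y].
Proof. by move=> cq; rewrite commMl (conj_central _ cq) (central_comml _ cq) mulg1. Qed.
Lemma commcl_l q x y : central q -> [~ q * x, y] = [~ x, y].
Proof. by move=> cq; rewrite cq commcl_r. Qed.
Lemma commcr_r q x y : central q -> [~ x, y * q] = [~ x, y].
Proof. by move=> cq; rewrite commMr (central_commr _ cq) mul1g (conj_central _ cq). Qed.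
Lemma commcr_l q x y : central q -> [~ x, q * y] = [~ x, y].
Proof. by move=> cq; rewrite cq commcr_r. Qed.

Lemma conjpow_gen u v d s k : u ^ v = u * d -> d ^ v = d * s -> central s ->
  u ^ (v ^+ k) = u * d ^+ k * s ^+ 'C(k, 2).
Proof.
move=> hu hd1 cs.
have hd : forall j, d ^ (v ^+ j) = d * s ^+ j.
  elim=> [|j IH]; first by rewrite expg0 conjg1 mulg1.
  by rewrite expgS conjgM hd1 conjMg IH (central_conj _ cs) -mulgA -expgSr.
elim: k => [|k IH]; first by rewrite expg0 conjg1 mulg1 mulg1.
rewrite expgS conjgM hu conjMg IH hd binS bin1.
rewrite expgnDr expgSr -!mulgA; congr (u * (d ^+ k * _)).
by rewrite mulgA (centralX _ cs d) -mulgA.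
Qed.
Lemma conjpow u v k : central [~ [~ u, v], v] ->
  u ^ (v ^+ k) = u * [~ u, v] ^+ k * [~ [~ u, v], v] ^+ 'C(k, 2).
Proof. by move=> cs; apply: conjpow_gen => //; apply: conjC. Qed.

Lemma hall_witt x y z :
  [~ [~ x, y^-1], z] ^ y * [~ [~ y, z^-1], x] ^ z * [~ [~ z, x^-1], y] ^ x = 1.
Proof. by gsimp. Qed.

Lemma expg_gcd g (p r : nat) : 0 < p -> g ^+ p = 1 -> g ^+ r = 1 -> g ^+ gcdn p r = 1.
Proof.
move=> p0 hp hq; case: (Bezoutl r p0) => a _ /dvdnP [k hk].
have : g ^+ (gcdn p r + a * r) = 1 by rewrite hk mulnC expgnA hp expg1n.
by rewrite expgnDr mulnC expgnA hq expg1n mulg1.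
Qed.

Lemma part1 x y (m : nat) : central (x ^+ m) -> central [~ x, y] -> [~ x, y] ^+ m = 1.
Proof. by move=> cx cc; rewrite -commXl // central_comml. Qed.

Lemma part2a x y (m : nat) : central (x ^+ m) -> central [~ [~ x, y], x] ->
  [~ [~ x, y], x] ^+ m = 1.
Proof. by move=> cx cc; rewrite -commXr // central_commr. Qed.

Lemma invC g : central g -> central g^-1.
Proof. exact: centralV. Qed.

Lemma part2b x y (m : nat) : 0 < m -> central (x ^+ m) -> central (y ^+ m) ->
  central [~ [~ x, y], x] -> central [~ [~ x, y], y] ->
  [~ [~ x, y], x * y^-1] ^+ gcdn m 'C(m, 2) = 1.
Proof.
set a := [~ x, y]; set t1 := [~ a, x]; set t2 := [~ a, y].
move=> m0 cxm cym c1 c2.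
have he : [~ a, x * y^-1] = t2^-1 * t1.
  by rewrite commMr commVr -/t2 (central_conj _ (centralV c2)) (central_conj _ c1).
have cm : commute t2^-1 t1 by apply: (centralV c2).
have h1m : t1 ^+ m = 1 by rewrite -commXr // central_commr.
have h2m : t2 ^+ m = 1 by rewrite -commXr // central_commr.
have E1 : a ^+ m * t2 ^+ 'C(m, 2) = 1.
  have := conjpow m c2; rewrite (conj_central _ cym) -/a -/t2 -mulgA.
  by move/(congr1 (mul x^-1)); rewrite mulKg mulVg => <-.
have E2 : a^-1 ^+ m * t1^-1 ^+ 'C(m, 2) = 1.
  have e1 : [~ [~ y, x], x] = t1^-1.
    by rewrite -(invgR x y) -/a commVl -/t1 (central_conj _ (centralV c1)).
  have c1' : central [~ [~ y, x], x] by rewrite e1; apply: centralV.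
  have := conjpow m c1'; rewrite e1 -(invgR x y) -/a.
  rewrite (conj_central _ cxm) -mulgA.
  by move/(congr1 (mul y^-1)); rewrite mulKg mulVg => <-.
apply: expg_gcd => //; rewrite he.
  by rewrite expgMn // expVgn h1m h2m invg1 mulg1.
rewrite expgMn // expVgn.
move/mulg1_eq: E1 => <-; rewrite invgK.
rewrite !expVgn in E2; move/mulg1_eq: E2; rewrite invgK => ->.
by rewrite mulVg.
Qed.

Lemma commz_inv u v : [~ v, u^-1] = u ^ v * u^-1.
Proof. by gsimp. Qed.

Lemma part3 x y z (m : nat) :
  central [~ x, z] -> central [~ [~ x, y], x] -> central [~ [~ x, y], y] ->
  central [~ [~ y, z], y] -> central [~ [~ y, z], z] ->
  central [~ [~ x, y], [~ y, z]] -> central (z ^+ m) ->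
  [~ [~ x, y], [~ y, z]] ^+ gcdn 2 m = 1.
Proof.
set a := [~ x, y]; set b := [~ y, z]; set c := [~ a, b].
set t1 := [~ a, x]; set t2 := [~ a, y]; set t3 := [~ b, y]; set t4 := [~ b, z].
move=> cq c1 c2 c3 c4 cc czm.
apply: expg_gcd => //; last first.
  have Eb : b ^+ m * t4 ^+ 'C(m, 2) = 1.
    have := conjpow m c4; rewrite (conj_central _ czm) -/b -/t4 -mulgA.
    by move/(congr1 (mul y^-1)); rewrite mulKg mulVg => <-.
  move/mulg1_eq: Eb => /(congr1 (@inv _)) Eb; rewrite invgK in Eb.
  by rewrite -commXr // Eb (central_commr _ (centralV (centralX _ c4))).
set w := [~ x, b].
have hA : [~ z, a^-1] = w * c.
  rewrite commz_inv /a conjRg (conjC x z) (conjC y z) -/b.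
  rewrite commcl_r // commMr -/a -/w (conjC a b) -/c.
  by rewrite -(mulgA w) -(cc a) mulgK.
have hD : [~ w, y] = c.
  rewrite commgEl /w conjRg (conjC x y) (conjC b y) -/a -/t3 commcr_r //.
  rewrite commMl -/c -/w conjRg (conjC x a) (conjC b a).
  rewrite -(invgR a x) -/t1 (commcl_r _ _ (centralV c1)) -(invgR a b) -/c (commcr_r _ _ (centralV cc)).
  by rewrite mulKg.
have := hall_witt y z a.
rewrite hA (commcl_r _ _ cc) hD (central_conj _ cc).
rewrite (commVr a y) -/t2 (central_conj _ (centralV c2)) (central_comml _ (centralV c2)) conj1g mulg1.
rewrite (commVr y z) -/b conjVg.
have -> : b ^ z^-1 = b * t4^-1.
  by apply: (@conjg_inj _ z); rewrite conjgKV conjMg (conjC b z) -/t4 (central_conj _ (centralV c4)) mulgK.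
rewrite invgM invgK commcl_l // commVl -(invgR a b) -/c invgK.
by rewrite !(central_conj _ cc) expgS expg1.
Qed.
End GT.

Definition Wt n := {w : word | wordin n w}.

Section Q.
Variables n m : nat.
Local Notation W := (Wt n).
Local Notation N := (inRF n m).

Definition eqv (u v : W) : Prop := N (winv (val u) ++ val v).

Lemma N_freeq u v : freeq u v -> N u -> N v.
Proof. exact: ncl_eq. Qed.

Lemma eqv_refl u : eqv u u.
Proof. apply: (N_freeq (freeq_sym (freeq_cancelV _))); exact: ncl_one. Qed.
Lemma eqv_sym u v : eqv u v -> eqv v u.
Proof. by move/ncl_inv; rewrite /eqv winv_cat winvK. Qed.
Lemma eqv_trans u v w : eqv u v -> eqv v w -> eqv u w.
Proof.
move=> h1 h2; have := ncl_mul h1 h2; apply: N_freeq.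
by rewrite -catA; apply: freeq_ins.
Qed.

Lemma wmul_proof (u v : W) : wordin n (val u ++ val v).
Proof. by rewrite wordin_cat (valP u) (valP v). Qed.
Lemma winv_proof (u : W) : wordin n (winv (val u)).
Proof. by rewrite wordin_winv (valP u). Qed.
Definition wmul (u v : W) : W := exist _ (val u ++ val v) (wmul_proof u v).
Definition winvW (u : W) : W := exist _ (winv (val u)) (winv_proof u).
Definition wone : W := exist _ [::] erefl.

Lemma eqv_mull u u' v : eqv u u' -> eqv (wmul u v) (wmul u' v).
Proof.
move=> h; have := ncl_conj (valP v) h.
by rewrite /eqv /wmul /= /wconj winv_cat -!catA.
Qed.
Lemma eqv_mulr u v v' : eqv v v' -> eqv (wmul u v) (wmul u v').
Proof.
apply: N_freeq; rewrite /wmul /= winv_cat -catA; apply: freeq_sym; exact: freeq_insV.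
Qed.
Lemma eqv_inv u u' : eqv u u' -> eqv (winvW u) (winvW u').
Proof.
move/eqv_sym=> h; have := ncl_conj (valP (winvW u)) h.
apply: N_freeq; rewrite /eqv /winvW /= /wconj winvK -!catA.
have h2 := freeq_ins (val u ++ winv (val u')) [::] (val u); rewrite -!catA !cats0 in h2; exact: h2.
Qed.
Lemma eqv_freeq u v : freeq (val u) (val v) -> eqv u v.
Proof.
move=> h; apply: (N_freeq (u := [::])); last exact: ncl_one.
apply: freeq_sym; apply: (freeq_trans _ (freeq_cancelV (val u))).
have h2 := freeq_ctx (winv (val u)) [::] (freeq_sym h); rewrite !cats0 in h2; exact: h2.
Qed.

Definition cls (u : W) : W -> Prop := eqv u.
Definition Gq := {P : W -> Prop | exists u, P = cls u}.
Definition toG (u : W) : Gq := exist _ (cls u) (ex_intro _ u erefl).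

Lemma toG_eq u v : toG u = toG v <-> eqv u v.
Proof.
split.
  move/(congr1 sval) => /= e; apply: eqv_sym.
  by have : cls u u := eqv_refl u; rewrite e.
move=> h; have e : cls u = cls v.
  apply: funext => w; apply: propext; split.
    by apply: eqv_trans; apply: eqv_sym.
  exact: eqv_trans.
rewrite /toG; move: (ex_intro _ u _) (ex_intro _ v _); rewrite e => p1 p2.
by congr exist; apply: Prop_irrelevance.
Qed.

Lemma Gind (g : Gq) : exists u, g = toG u.
Proof.
case: g => P [u e]; exists u; subst P; rewrite /toG.
by congr exist; apply: Prop_irrelevance.
Qed.

Definition rep (g : Gq) : W := projT1 (cid (Gind g)).
Lemma repK g : toG (rep g) = g.
Proof. by rewrite /rep; case: (cid (Gind g)) => u /= ->. Qed.
Lemma rep_eqv u : eqv (rep (toG u)) u.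
Proof. by apply/toG_eq; rewrite repK. Qed.

Definition gmul (g h : Gq) : Gq := toG (wmul (rep g) (rep h)).
Definition ginv (g : Gq) : Gq := toG (winvW (rep g)).
Definition gone : Gq := toG wone.

Lemma gmulE u v : gmul (toG u) (toG v) = toG (wmul u v).
Proof.
apply/toG_eq; apply: (eqv_trans (eqv_mull _ (rep_eqv u))).
exact: eqv_mulr (rep_eqv v).
Qed.
Lemma ginvE u : ginv (toG u) = toG (winvW u).
Proof. by apply/toG_eq; apply: eqv_inv; apply: rep_eqv. Qed.

Lemma toG_val u v : val u = val v -> toG u = toG v.
Proof. by move=> e; congr toG; apply: val_inj. Qed.

Lemma gmulA : associative gmul.
Proof.
move=> x y z; case: (Gind x) (Gind y) (Gind z) => [u ->] [v ->] [w ->].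
by rewrite !gmulE; apply: toG_val; rewrite /= catA.
Qed.
Lemma gmul1 : left_id gone gmul.
Proof. by move=> x; case: (Gind x) => [u ->]; rewrite /gone gmulE; apply: toG_val. Qed.
Lemma gmul1r : right_id gone gmul.
Proof. by move=> x; case: (Gind x) => [u ->]; rewrite /gone gmulE; apply: toG_val; rewrite /= cats0. Qed.
Lemma gmulV : left_inverse gone ginv gmul.
Proof.
move=> x; case: (Gind x) => [u ->]; rewrite ginvE gmulE; apply/toG_eq.
by apply: eqv_freeq; apply: freeq_cancelV.
Qed.
Lemma gmulVr : right_inverse gone ginv gmul.
Proof.
move=> x; case: (Gind x) => [u ->]; rewrite ginvE gmulE; apply/toG_eq.
by apply: eqv_freeq; apply: freeq_cancel.
Qed.
End Q.

HB.instance Definition _ n m := gen_eqMixin (Gq n m).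
HB.instance Definition _ n m := gen_choiceMixin (Gq n m).
HB.instance Definition _ n m := isGroup.Build (Gq n m)
  (@gmulA n m) (@gmul1 n m) (@gmul1r n m) (@gmulV n m) (@gmulVr n m).


Lemma toG_mul n m (u v : Wt n) : (@toG n m u * @toG n m v)%g = @toG n m (wmul u v).
Proof. exact: gmulE. Qed.
Lemma toG_inv n m (u : Wt n) : (@toG n m u)^-1%g = @toG n m (winvW u).
Proof. exact: ginvE. Qed.

Section PW.
Variables n m : nat.
Local Notation G := (Gq n m).

Definition pw (w : word) : G :=
  match (insub w : option (Wt n)) with Some u => @toG n m u | None => 1 end.

Lemma pw_in w (h : wordin n w) : pw w = @toG n m (exist _ w h).
Proof. by rewrite /pw insubT. Qed.

Lemma pw_cat u v : wordin n u -> wordin n v -> pw (u ++ v) = pw u * pw v.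
Proof.
move=> hu hv; have huv : wordin n (u ++ v) by rewrite wordin_cat hu hv.
rewrite (pw_in huv) (pw_in hu) (pw_in hv); rewrite toG_mul.
exact: toG_val.
Qed.
Lemma pw_winv u : wordin n u -> pw (winv u) = (pw u)^-1.
Proof.
move=> hu; have hv : wordin n (winv u) by rewrite wordin_winv.
rewrite (pw_in hv) (pw_in hu); rewrite toG_inv.
exact: toG_val.
Qed.
Lemma pw_nil : pw [::] = 1.
Proof. by rewrite (pw_in (erefl : wordin n [::])); apply: toG_val. Qed.
Lemma wordin_wpow u k : wordin n u -> wordin n (wpow u k).
Proof. by move=> hu; elim: k => //= k IH; rewrite wordin_cat hu IH. Qed.
Lemma pw_pow u k : wordin n u -> pw (wpow u k) = pw u ^+ k.
Proof.
move=> hu; elim: k => [|k IH] /=; first by rewrite pw_nil expg0.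
by rewrite pw_cat ?wordin_wpow // IH expgS.
Qed.
Lemma wordin_wcomm u v : wordin n u -> wordin n v -> wordin n (wcomm u v).
Proof. by move=> hu hv; rewrite /wcomm !wordin_cat !wordin_winv hu hv. Qed.
Lemma pw_comm u v : wordin n u -> wordin n v -> pw (wcomm u v) = [~ pw u, pw v].
Proof.
move=> hu hv; rewrite /wcomm !pw_cat ?wordin_cat ?wordin_winv ?hu ?hv //.
by rewrite !pw_winv.
Qed.
Lemma pw_one w : wordin n w -> pw w = 1 -> inRF n m w.
Proof.
move=> hw; rewrite (pw_in hw) -pw_nil (pw_in (erefl : wordin n [::])).
move/toG_eq => /ncl_inv; rewrite /= cats0 winvK; exact.
Qed.
Lemma pw_central r : wordin n r -> inR n m r -> central (pw r).
Proof.
move=> hr hR g; case: (Gind g) => [v ->]; rewrite (pw_in hr).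
rewrite !toG_mul; apply/toG_eq.
have : RFgen n m (wcomm r (val v)).
  by exists r, (val v); split => //; apply: valP.
move/ncl_gen/ncl_inv; rewrite /eqv /= /wcomm !winv_cat !winvK -!catA; exact.
Qed.
End PW.

From mathcomp Require Import zify.

Theorem mainTheorem1 (n m : nat) (hn : 3 <= n) (hm : 2 <= m) :
  (forall i j, 1 <= i -> i < j.-1 -> j.-1 <= n - 2 ->
     order_dvd_FRF n m (wcomm (gen i) (gen j)) m)
  /\ (forall i, 1 <= i -> i <= n - 2 ->
     order_dvd_FRF n m (wcomm (wcomm (gen i) (gen i.+1)) (gen i)) m
     /\ order_dvd_FRF n m
          (wcomm (wcomm (gen i) (gen i.+1)) (gen i ++ winv (gen i.+1)))
          (gcdn m 'C(m, 2)))
  /\ (forall i, 1 <= i -> i <= n - 3 ->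
     order_dvd_FRF n m
       (wcomm (wcomm (gen i) (gen i.+1)) (wcomm (gen i.+1) (gen i.+2)))
       (gcdn 2 m)).
Proof.
have wg i : 1 <= i -> i <= n - 1 -> wordin n (gen i).
  by move=> h1 h2; rewrite /wordin /= h1 h2.
have cen r : relator n m r -> wordin n r -> central (pw n m r).
  by move=> hr hw; apply: pw_central => //; apply: ncl_gen.
have cpow i : 1 <= i -> i <= n - 1 -> central (pw n m (gen i) ^+ m).
  move=> h1 h2; rewrite -pw_pow; last exact: wg.
  apply: cen; last by apply: wordin_wpow; apply: wg.
  by left; exists i.
split; [|split].
- move=> i j h1 h2 h3.
  have hi := wg i h1 (ltac:(lia)); have hj := wg j (ltac:(lia)) (ltac:(lia)).
  apply: pw_one; first by apply: wordin_wpow; apply: wordin_wcomm.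
  rewrite pw_pow ?wordin_wcomm // pw_comm //; apply: part1.
    by apply: cpow; lia.
  rewrite -pw_comm //; apply: cen; last exact: wordin_wcomm.
  by right; left; exists i, j.
- move=> i h1 h2.
  have hx := wg i h1 (ltac:(lia)); have hy := wg i.+1 (ltac:(lia)) (ltac:(lia)).
  have ha := wordin_wcomm hx hy.
  have c1 : central [~ [~ pw n m (gen i), pw n m (gen i.+1)], pw n m (gen i)].
    rewrite -!pw_comm //; apply: cen; last exact: wordin_wcomm.
    by right; right; left; exists i; split => //; left.
  have c2 : central [~ [~ pw n m (gen i), pw n m (gen i.+1)], pw n m (gen i.+1)].
    rewrite -!pw_comm //; apply: cen; last exact: wordin_wcomm.
    by right; right; left; exists i; split => //; right.
  split.
    apply: pw_one; first by apply: wordin_wpow; apply: wordin_wcomm.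
    by rewrite pw_pow ?wordin_wcomm // !pw_comm //; apply: part2a => //; apply: cpow; lia.
  have hxy : wordin n (gen i ++ winv (gen i.+1)) by rewrite wordin_cat wordin_winv hx hy.
  apply: pw_one; first by apply: wordin_wpow; apply: wordin_wcomm.
  rewrite pw_pow ?wordin_wcomm // !pw_comm // pw_cat ?wordin_winv // pw_winv //.
  by apply: part2b => //; try lia; apply: cpow; lia.
- move=> i h1 h2.
  have hx := wg i h1 (ltac:(lia)); have hy := wg i.+1 (ltac:(lia)) (ltac:(lia)).
  have hz := wg i.+2 (ltac:(lia)) (ltac:(lia)).
  apply: pw_one; first by apply: wordin_wpow; apply: wordin_wcomm; apply: wordin_wcomm.
  rewrite pw_pow ?wordin_wcomm // !pw_comm ?wordin_wcomm //.
  apply: (part3 (m := m)).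
  + rewrite -pw_comm //; apply: cen; last exact: wordin_wcomm.
    by right; left; exists i, i.+2; split => //; lia.
  + rewrite -!pw_comm ?wordin_wcomm //; apply: cen; last by rewrite !wordin_wcomm.
    by right; right; left; exists i; split => //; [lia | left].
  + rewrite -!pw_comm ?wordin_wcomm //; apply: cen; last by rewrite !wordin_wcomm.
    by right; right; left; exists i; split => //; [lia | right].
  + rewrite -!pw_comm ?wordin_wcomm //; apply: cen; last by rewrite !wordin_wcomm.
    by right; right; left; exists i.+1; split => //; [lia | left].
  + rewrite -!pw_comm ?wordin_wcomm //; apply: cen; last by rewrite !wordin_wcomm.
    by right; right; left; exists i.+1; split => //; [lia | right].
  + rewrite -!pw_comm ?wordin_wcomm //; apply: cen; last by rewrite !wordin_wcomm.
    by right; right; right; exists i; split.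
  + by apply: cpow; lia.
Qed.
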